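(* Let $G$ be a connected graph of order $n$ and stability number $\alpha$ such that $F(G) \ge F(H)$ for every connected graph $H$ of order $n$ and stability number $\alpha$. Then either $G$ is $\alpha$-critical, or $G$ has an $\alpha$-critical decomposition.
   Context: All graphs are finite, simple and undirected; $\alpha(G)$ denotes the stability number. The Fibonacci index $F(G)$ is the number of stable sets of $G$, including the empty set. For an edge $e$, $G-e$ denotes $G$ with the edge $e$ deleted. An edge $e$ is $\alpha$-critical if $\alpha(G-e)>\alpha(G)$ and $\alpha$-safe otherwise; a graph is $\alpha$-critical if all its edges are $\alpha$-critical (a graph with no edge counts as $\alpha$-critical). A bridge of a connected graph $G$ is an edge $e$ such that $G-e$ is disconnected. For an $\alpha$-safe bridge $e=v_1v_2$ of $G$, the associated decomposition is $(G_1,v_1,G_2,v_2)$ where $G_1,G_2$ are the two connected components of $G-e$ with $v_1\in V(G_1)$, $v_2\in V(G_2)$. A decomposition $(G_1,v_1,G_2,v_2)$ is $\alpha$-critical if $G_1$ is $\alpha$-critical. *)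

(* Defs.v *)
(* A simple graph on a finite vertex type T is a
   symmetric, irreflexive relation e : rel T. *)
From mathcomp Require Import all_boot.
Set Implicit Arguments. Unset Strict Implicit. Unset Printing Implicit Defensive.

Section Graphs.
Variable T : finType.

Definition simple_graph (e : rel T) : Prop := symmetric e /\ irreflexive e.

Definition connected (e : rel T) : Prop := forall x y : T, connect e x y.

Definition stable (e : rel T) (A : {set T}) : bool :=
  [forall x in A, forall y in A, ~~ e x y].

Definition alpha (e : rel T) : nat := \max_(A : {set T} | stable e A) #|A|.

(* Fibonacci index: number of stable sets, including the empty set *)
Definition fibo (e : rel T) : nat := #|[set A : {set T} | stable e A]|.

Definition del_edge (e : rel T) (u v : T) : rel T :=
  fun x y => e x y && ~~ (((x == u) && (y == v)) || ((x == v) && (y == u))).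

Definition alpha_critical_edge (e : rel T) (u v : T) : Prop :=
  alpha e < alpha (del_edge e u v).

(* every edge is alpha-critical (vacuous for edgeless graphs) *)
Definition alpha_critical (e : rel T) : Prop :=
  forall u v, e u v -> alpha_critical_edge e u v.

Definition bridge (e : rel T) (u v : T) : Prop :=
  e u v /\ ~ connected (del_edge e u v).

Definition induced (e : rel T) (C : {set T}) : rel {x : T | x \in C} :=
  fun x y => e (val x) (val y).

Definition component (e : rel T) (x : T) : {set T} := [set y | connect e x y].

End Graphs.

Arguments induced {T} e C.

Definition has_alpha_critical_decomposition (T : finType) (e : rel T) : Prop :=
  exists v1 v2 : T,
    [/\ bridge e v1 v2, ~ alpha_critical_edge e v1 v2 &
        alpha_critical (induced (del_edge e v1 v2) (component (del_edge e v1 v2) v1))].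

(* Main.v *)
Require Import Defs.
From mathcomp Require Import all_boot.
From Stdlib Require Import FunctionalExtensionality.
Set Implicit Arguments. Unset Strict Implicit. Unset Printing Implicit Defensive.

Lemma stableP (T : finType) (e : rel T) (A : {set T}) :
  reflect (forall x y, x \in A -> y \in A -> ~~ e x y) (stable e A).
Proof.
apply: (iffP forall_inP) => H x.
- move=> y xA yA; exact: (forall_inP (H x xA) y yA).
- move=> xA; apply/forall_inP => y yA; exact: H.
Qed.

Lemma alpha_attained (T : finType) (e : rel T) :
  exists2 A : {set T}, stable e A & #|A| = alpha e.
Proof.
rewrite /alpha.
have [|A HA ->] := @eq_bigmax_cond _ (fun A : {set T} => stable e A) (fun A => #|A|).
  apply/card_gt0P; exists set0; rewrite unfold_in; apply/stableP => x y; by rewrite inE.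
by exists A.
Qed.

Lemma alpha_ge (T : finType) (e : rel T) A : stable e A -> #|A| <= alpha e.
Proof. move=> sA; exact: (@leq_bigmax_cond _ (fun A : {set T} => stable e A) (fun A => #|A|)). Qed.

Lemma alpha_mono (T : finType) (h g : rel T) :
  (forall x y, h x y -> g x y) -> alpha g <= alpha h.
Proof.
move=> Hhg; have [A /stableP sA <-] := alpha_attained g; apply: alpha_ge.
apply/stableP => x y xA yA; apply/negP => /Hhg; apply/negP; exact: sA.
Qed.

Lemma del_sub (T : finType) (g : rel T) u v x y : del_edge g u v x y -> g x y.
Proof. by case/andP. Qed.

Lemma del_sym (T : finType) (g : rel T) u v : symmetric g -> symmetric (del_edge g u v).
Proof.
move=> sg x y; rewrite /del_edge sg.
by case: (x == u); case: (y == v); case: (x == v); case: (y == u).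
Qed.

Lemma del_swap (T : finType) (g : rel T) a b : del_edge g b a = del_edge g a b.
Proof.
apply: functional_extensionality => x; apply: functional_extensionality => y.
rewrite /del_edge.
by case: (x == a); case: (y == b); case: (x == b); case: (y == a).
Qed.

Lemma connect_closed (T : finType) (r : rel T) (P : pred T) :
  (forall x y, P x -> r x y -> P y) -> forall x y, connect r x y -> P x -> P y.
Proof.
move=> H x y /connectP [p pth ->]; elim: p x pth => //= z p IH x /andP [rxz pth] Px.
apply: IH => //; exact: H rxz.
Qed.

Lemma conn_ab (T : finType) (g : rel T) a b :
  connected g -> forall z, connect (del_edge g a b) a z || connect (del_edge g a b) b z.
Proof.
move=> cg z.
apply: (@connect_closed _ g [pred z | connect (del_edge g a b) a z || connect (del_edge g a b) b z]) (cg a z) _; last by rewrite /= connect0.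
move=> x y /= /orP Hx gxy; case Hd: (del_edge g a b x y).
  by case: Hx => H; [apply/orP; left | apply/orP; right]; apply: connect_trans H (connect1 Hd).
move: Hd; rewrite /del_edge gxy /= => /negbFE /orP [] /andP [_ /eqP ->];
  by rewrite connect0 ?orbT.
Qed.

Lemma shrink (T : finType) (g : rel T) v1 v2 x y :
  symmetric g -> g v1 v2 -> del_edge g v1 v2 x y ->
  ~ connect (del_edge g x y) x y -> connect (del_edge g x y) v1 y ->
  x \in component (del_edge g v1 v2) v1 ->
  #|component (del_edge g x y) x| < #|component (del_edge g v1 v2) v1|.
Proof.
move=> sg gv exy nxy v1y xC.
have she := del_sym x y sg; have sge := del_sym v1 v2 sg.
have hv : del_edge g x y v1 v2.
  move: exy; rewrite /del_edge gv /= => /andP [_]; apply: contra.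
  by case/orP => /andP [/eqP <- /eqP <-]; rewrite !eqxx ?orbT.
apply: proper_card; apply/properP; split.
- apply/subsetP => z; rewrite !inE => hxz.
  have cl : forall z1 z2, connect (del_edge g v1 v2) x z1 || connect (del_edge g x y) z1 v1 ->
      del_edge g x y z1 z2 ->
      connect (del_edge g v1 v2) x z2 || connect (del_edge g x y) z2 v1.
    move=> z1 z2 /orP [exz1 | hz1] hz12.
      case He: (del_edge g v1 v2 z1 z2).
        by rewrite (connect_trans exz1 (connect1 He)).
      move: He; rewrite /del_edge (del_sub hz12) /= => /negbFE.
      case/orP => /andP [_ /eqP ->]; apply/orP; right.
        apply: connect1; exact: (etrans (she v2 v1) hv).
      by rewrite connect0.
    apply/orP; right; apply: connect_trans hz1; apply: connect1; by rewrite she.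
  have := @connect_closed _ (del_edge g x y)
    [pred z | connect (del_edge g v1 v2) x z || connect (del_edge g x y) z v1] cl x z hxz.
  rewrite /= connect0 => /(_ isT) /orP [exz | hzv]; last first.
    case: nxy; apply: connect_trans (connect_trans hxz hzv) v1y.
  move: xC; rewrite inE => v1x; exact: connect_trans v1x exz.
- exists v1; first by rewrite inE connect0.
  rewrite inE; apply/negP => hxv; case: nxy; exact: connect_trans hxv v1y.
Qed.

Lemma safe_bridge (n : nat) (g : rel 'I_n) :
  simple_graph g ->
  (forall h : rel 'I_n, simple_graph h -> connected h ->
     alpha h = alpha g -> fibo h <= fibo g) ->
  forall u v, g u v -> ~~ (alpha g < alpha (del_edge g u v)) -> ~ connected (del_edge g u v).
Proof.
move=> [sg ig] Hmax u v guv safe cd.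
have sd : simple_graph (del_edge g u v).
  split; first exact: del_sym.
  by move=> x; rewrite /del_edge ig.
have ad : alpha (del_edge g u v) = alpha g.
  apply/eqP; rewrite eqn_leq leqNgt safe /=; apply: alpha_mono; exact: del_sub.
have := Hmax _ sd cd ad; apply/negP; rewrite -ltnNge /fibo.
apply: proper_card; apply/properP; split.
  apply/subsetP => A; rewrite !inE => /stableP sA; apply/stableP => x y xA yA.
  apply/negP => /del_sub; apply/negP; exact: sA.
have uv : u != v by apply/negP => /eqP E; move: guv; rewrite E ig.
exists [set u; v]; rewrite !inE.
  apply/stableP => x y; rewrite !inE => /orP [] /eqP -> /orP [] /eqP ->;
    rewrite /del_edge ?ig ?eqxx ?orbT /= ?orbT ?andbF //.
apply/negP => /stableP H; have := H u v; rewrite !inE !eqxx orbT guv; by move/(_ isT isT).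
Qed.

Lemma crit_lift (T : finType) (g : rel T) v1 v2
  (a' b' : {x : T | x \in component (del_edge g v1 v2) v1}) :
  symmetric g -> ~~ (alpha g < alpha (del_edge g v1 v2)) ->
  alpha g < alpha (del_edge g (val a') (val b')) ->
  alpha (induced (del_edge g v1 v2) (component (del_edge g v1 v2) v1)) <
  alpha (del_edge (induced (del_edge g v1 v2) (component (del_edge g v1 v2) v1)) a' b').
Proof.
move=> sg safe crit.
set e := del_edge g v1 v2 in safe *.
set C := component e v1.
have she : symmetric e by exact: del_sym.
have aeg : alpha e <= alpha g by rewrite leqNgt.
have inC : forall x y, e x y -> x \in C -> y \in C.
  move=> x y exy; rewrite !inE => cx; exact: connect_trans cx (connect1 exy).
have [S /stableP sS cS] := alpha_attained (del_edge g (val a') (val b')).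
have [T1 /stableP sT1 cT1] := alpha_attained (induced e C).
have sU : stable e ((val @: T1) :|: (S :\: C)).
  apply/stableP => x y.
  case/setUP => [/imsetP [x0 x0T ->] | /setDP [xS xC]];
  case/setUP => [/imsetP [y0 y0T ->] | /setDP [yS yC]].
  - exact: sT1.
  - apply/negP => exy; move/negP: yC; apply; exact: inC exy (valP x0).
  - apply/negP => exy; move/negP: xC; apply; apply: inC (valP y0); by rewrite she.
  - apply/negP => exy; have := sS _ _ xS yS; rewrite /del_edge (del_sub exy) /=.
    have xa : (x == val a') = false by apply/negbTE; apply: contraNneq xC => ->; exact: valP.
    have xb : (x == val b') = false by apply/negbTE; apply: contraNneq xC => ->; exact: valP.
    by rewrite xa xb.
have cU : #|(val @: T1) :|: (S :\: C)| = #|T1| + #|S :\: C|.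
  rewrite cardsU (_ : _ :&: _ = set0) ?cards0 ?subn0 ?card_imset //; first exact: val_inj.
  apply/setP => z; rewrite in_set0; apply/negbTE/negP.
  by case/setIP => /imsetP [z0 _ ->] /setDP [_]; rewrite (valP z0).
have cS1 : #|[set x : {x : T | x \in C} | val x \in S]| = #|S :&: C|.
  rewrite -(card_imset _ val_inj); apply: eq_card => z.
  apply/imsetP/setIP.
    by case=> z0; rewrite inE => zS ->; split => //; exact: valP.
  by case=> zS zC; exists (exist _ z zC); rewrite ?inE.
have sS1 : stable (del_edge (induced e C) a' b') [set x : {x : T | x \in C} | val x \in S].
  apply/stableP => x y; rewrite !inE => xS yS.
  have := sS _ _ xS yS; rewrite /induced /del_edge !val_eqE.
  apply: contra => /andP [/andP [gxy _] H]; by rewrite gxy H.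
rewrite -cT1; apply: leq_trans (alpha_ge sS1); rewrite cS1.
have := alpha_ge sU; rewrite cU => H1.
have H2 : #|T1| + #|S :\: C| < #|S :&: C| + #|S :\: C|.
  rewrite cardsID cS; apply: leq_ltn_trans H1 _; exact: leq_ltn_trans aeg crit.
by rewrite ltn_add2r in H2.
Qed.

Theorem mainTheorem8 (n : nat) (g : rel 'I_n) :
  simple_graph g -> connected g ->
  (forall h : rel 'I_n, simple_graph h -> connected h ->
     alpha h = alpha g -> fibo h <= fibo g) ->
  alpha_critical g \/ has_alpha_critical_decomposition g.
Proof.
move=> sgr cg Hmax; have [sg ig] := sgr.
have SB := safe_bridge sgr Hmax.
case: (boolP [exists u, exists v, g u v && ~~ (alpha g < alpha (del_edge g u v))]) => [Hex | Hno];
  last first.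
  left => u v guv; rewrite /alpha_critical_edge; case Hc: (alpha g < _) => //.
  case/negP: Hno; apply/existsP; exists u; apply/existsP; exists v; by rewrite guv Hc.
right.
pose Pm k := [exists p : 'I_n * 'I_n, [&& g p.1 p.2, ~~ (alpha g < alpha (del_edge g p.1 p.2))
   & #|component (del_edge g p.1 p.2) p.1| == k]].
have exk : exists k, Pm k.
  case/existsP: Hex => u /existsP [v /andP [guv sf]].
  exists #|component (del_edge g u v) u|; apply/existsP; exists (u, v); by rewrite /= guv sf eqxx.
case: (ex_minnP exk) => m /existsP [[v1 v2] /and3P [/= gv Hsafe /eqP Hsz]] Hmin.
exists v1, v2; split.
- split => //; exact: SB.
- exact/negP.
- move=> a' b' Hab.
  have gab : g (val a') (val b') := del_sub Hab.
  case Hc: (alpha g < alpha (del_edge g (val a') (val b'))).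
    exact: crit_lift.
  have nb := SB _ _ gab (negbT Hc).
  have shab := del_sym (val a') (val b') sg.
  have nab : ~ connect (del_edge g (val a') (val b')) (val a') (val b').
    move=> cab; apply: nb => x y.
    have toa : forall z, connect (del_edge g (val a') (val b')) (val a') z.
      move=> z; case/orP: (conn_ab (val a') (val b') cg z) => // H.
      exact: connect_trans cab H.
    apply: (connect_trans (y := val a')); last exact: toa y.
    rewrite (sym_connect_sym shab); exact: toa x.
  have aC := valP a'; have bC := valP b'.
  have Pm' : forall x y, g x y -> ~~ (alpha g < alpha (del_edge g x y)) ->
      m <= #|component (del_edge g x y) x|.
    move=> x y gxy sxy; apply: Hmin; apply/existsP; exists (x, y); by rewrite /= gxy sxy eqxx.
  case/orP: (conn_ab (val a') (val b') cg v1) => Hv.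
  + have := Pm' _ _ (etrans (sg _ _) gab) (negbT (etrans (f_equal (fun r => alpha g < alpha r) (del_swap g (val a') (val b'))) Hc)).
    rewrite leqNgt -Hsz => /negP H; exfalso; apply: H.
    apply: shrink => //.
    * by rewrite (del_sym v1 v2 sg).
    * by rewrite del_swap (sym_connect_sym shab).
    * by rewrite del_swap -(sym_connect_sym shab).
  + have := Pm' _ _ gab (negbT Hc).
    rewrite leqNgt -Hsz => /negP H; exfalso; apply: H.
    apply: shrink => //.
    by rewrite -(sym_connect_sym shab).
Qed.
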